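(* Let $p,q\ge0$ be integers and $a_1,\dots,a_p,b_1,\dots,b_q>0$, and let $$F(x)={}_pF_q(a_1,\dots,a_p;b_1,\dots,b_q;x)=1+\sum_{n=1}^\infty\frac{\prod_{k=1}^p(a_k,n)}{\prod_{k=1}^q(b_k,n)}\frac{x^n}{n!},$$ considered on $(-1,1)$ (assuming the series converges there, i.e. $p\le q+1$). Then: (1) If $p=q=0$, then $F(x)=e^x$, which is log-convex. (2) Let $p=q\ge1$. If $a_k\le b_k$ for each $k$, with at least one strict inequality, then $F$ is strictly log-convex on $(0,1)$. If $a_k\ge b_k$ for each $k$, with at least one strict inequality, then $F$ is strictly log-concave on $(0,1)$. (3) If $p>q$ and $a_k\le b_k$ for $k=1,\dots,q$, with at least one strict inequality, then $F$ is strictly log-convex on $(0,1)$. (4) If $1\le p<q$ and $a_k\ge b_k$ for $k=1,\dots,p$, with at least one strict inequality, then $F$ is strictly log-concave on $(0,1)$. (5) If $p=0$ and $q\ge1$, then $F$ is log-concave on $(0,1)$.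
   Context: $(a,0)=1$ and $(a,n)=a(a+1)\cdots(a+n-1)$ for $n\ge1$. *)

(* Defs.v *)
From Stdlib Require Import Reals Lra Lia.
From Coquelicot Require Import Coquelicot.
Open Scope R_scope.

Fixpoint poch (a : R) (n : nat) : R :=
  match n with
  | O => 1
  | S m => poch a m * (a + INR m)
  end.

Fixpoint prodR (f : nat -> R) (n : nat) : R :=
  match n with
  | O => 1
  | S m => prodR f m * f m
  end.

(* n-th coefficient of pFq(a_1..a_p; b_1..b_q; x); parameters indexed
   a 0 .. a (p-1), b 0 .. b (q-1).  The n = 0 coefficient is 1. *)
Definition hypcoef (p q : nat) (a b : nat -> R) (n : nat) : R :=
  prodR (fun k => poch (a k) n) p / prodR (fun k => poch (b k) n) q
  / INR (Factorial.fact n).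

Definition hypF (p q : nat) (a b : nat -> R) (x : R) : R :=
  PSeries (hypcoef p q a b) x.

Definition log_convex_on (I : R -> Prop) (f : R -> R) : Prop :=
  (forall x, I x -> 0 < f x) /\
  forall x y t, I x -> I y -> 0 < t < 1 ->
    ln (f (t * x + (1 - t) * y)) <= t * ln (f x) + (1 - t) * ln (f y).

Definition strictly_log_convex_on (I : R -> Prop) (f : R -> R) : Prop :=
  (forall x, I x -> 0 < f x) /\
  forall x y t, I x -> I y -> x <> y -> 0 < t < 1 ->
    ln (f (t * x + (1 - t) * y)) < t * ln (f x) + (1 - t) * ln (f y).

Definition log_concave_on (I : R -> Prop) (f : R -> R) : Prop :=
  (forall x, I x -> 0 < f x) /\
  forall x y t, I x -> I y -> 0 < t < 1 ->
    t * ln (f x) + (1 - t) * ln (f y) <= ln (f (t * x + (1 - t) * y)).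

Definition strictly_log_concave_on (I : R -> Prop) (f : R -> R) : Prop :=
  (forall x, I x -> 0 < f x) /\
  forall x y t, I x -> I y -> x <> y -> 0 < t < 1 ->
    t * ln (f x) + (1 - t) * ln (f y) < ln (f (t * x + (1 - t) * y)).

Definition open01 (x : R) : Prop := 0 < x < 1.
Definition openm11 (x : R) : Prop := -1 < x < 1.

(* Main.v *)
Require Import Defs.
From Stdlib Require Import Reals Lra Lia.
From Coquelicot Require Import Coquelicot.
From Stdlib Require Import Wf_nat Classical.
Open Scope R_scope.

Lemma Series_zero : Series (fun _ => 0) = 0.
Proof.
  transitivity (Series (fun n : nat => 0 * 0)).
  - apply Series_ext; intros; ring.
  - rewrite Series_scal_l; ring.
Qed.

Lemma ex_series_minusR (u v : nat -> R) :
  ex_series u -> ex_series v -> ex_series (fun n => u n - v n).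
Proof.
  intros Hu Hv.
  apply ex_series_ext with (fun n => plus (u n) (opp (v n))).
  - intros; reflexivity.
  - exact (ex_series_minus u v Hu Hv).
Qed.

Lemma ex_series_scalR (c : R) (u : nat -> R) :
  ex_series u -> ex_series (fun n => c * u n).
Proof.
  intros Hu.
  apply ex_series_ext with (fun n => scal c (u n)).
  - intros; reflexivity.
  - exact (ex_series_scal_l c u Hu).
Qed.

Lemma Series_le_gen (u v : nat -> R) :
  ex_series u -> ex_series v -> (forall n, u n <= v n) -> Series u <= Series v.
Proof.
  intros Hu Hv H.
  assert (H0 : Series (fun _ => 0) <= Series (fun n => v n - u n)).
  { apply Series_le.
    - intros n; specialize (H n); lra.
    - apply ex_series_minusR; auto. }
  rewrite Series_zero, Series_minus in H0 by auto. lra.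
Qed.

Lemma Series_pos_k (u : nat -> R) (k : nat) :
  ex_series u -> (forall n, 0 <= u n) -> 0 < u k -> 0 < Series u.
Proof.
  intros Hu H Hk.
  rewrite (Series_incr_n u (S k)) by (lia || auto). simpl pred.
  assert (H1 : 0 <= Series (fun j => u (S k + j)%nat)).
  { rewrite <- Series_zero. apply Series_le.
    - intros; split; [lra | apply H].
    - apply (ex_series_incr_n u (S k)); auto. }
  assert (H2 : forall m, 0 <= sum_f_R0 u m).
  { induction m; simpl; [apply H|]. specialize (H (S m)); lra. }
  assert (H3 : u k <= sum_f_R0 u k).
  { destruct k; simpl; [lra|]. specialize (H2 k). lra. }
  lra.
Qed.

Lemma Series_lt_gen (u v : nat -> R) (k : nat) :
  ex_series u -> ex_series v -> (forall n, u n <= v n) -> u k < v k ->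
  Series u < Series v.
Proof.
  intros Hu Hv H Hk.
  assert (H0 : 0 < Series (fun n => v n - u n)).
  { apply (Series_pos_k _ k).
    - apply ex_series_minusR; auto.
    - intros n; specialize (H n); lra.
    - lra. }
  rewrite Series_minus in H0 by auto. lra.
Qed.

Lemma pow_decr (th : R) (m n : nat) :
  0 <= th <= 1 -> (m <= n)%nat -> th ^ n <= th ^ m.
Proof.
  intros Hth Hmn. induction Hmn; [lra|].
  simpl. assert (0 <= th ^ m0) by (apply pow_le; lra). nra.
Qed.

Lemma pow_sdecr (th : R) (m : nat) :
  0 < th < 1 -> th ^ (S m) < th ^ m.
Proof.
  intros Hth. simpl. assert (0 < th ^ m) by (apply pow_lt; lra). nra.
Qed.

Lemma mono_of_step (rho : nat -> R) :
  (forall n, rho n <= rho (S n)) -> forall m n, (m <= n)%nat -> rho m <= rho n.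
Proof.
  intros H m n Hmn. induction Hmn; [lra|]. specialize (H m0); lra.
Qed.

Lemma least_ex (P : nat -> Prop) : (exists n, P n) ->
  exists N, P N /\ forall m, P m -> (N <= m)%nat.
Proof.
  intros H.
  destruct (dec_inh_nat_subset_has_unique_least_element P (fun n => classic (P n)) H)
    as [N [[HN HN2] _]].
  exists N; split; auto.
Qed.

Lemma core_gen (c rho : nat -> R) (lam x y : R) (strict : bool) :
  (forall m, 0 < c m) ->
  (forall n, if strict then rho n < rho (S n) else rho n <= rho (S n)) ->
  0 < x < y ->
  ex_series (fun m => (rho m - lam) * (c m * y ^ m)) ->
  ex_series (fun m => (rho m - lam) * (c m * x ^ m)) ->
  Series (fun m => (rho m - lam) * (c m * y ^ m)) = 0 ->
  (if strict then Series (fun m => (rho m - lam) * (c m * x ^ m)) < 0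
   else Series (fun m => (rho m - lam) * (c m * x ^ m)) <= 0).
Proof.
  intros Hc Hr Hxy Hey Hex H0.
  assert (Hr' : forall n, rho n <= rho (S n)).
  { intros n; specialize (Hr n); destruct strict; lra. }
  assert (Hmono := mono_of_step rho Hr').
  set (th := x / y).
  assert (Hth : 0 < th < 1).
  { unfold th; split; [apply Rdiv_lt_0_compat; lra|].
    apply (Rmult_lt_reg_r y); [lra|]. unfold Rdiv. rewrite Rmult_assoc, Rinv_l; lra. }
  assert (Hx : forall m, x ^ m = y ^ m * th ^ m).
  { intros m. rewrite <- Rpow_mult_distr. unfold th. f_equal. field. lra. }
  assert (Hyp : forall m, 0 < c m * y ^ m).
  { intros m. apply Rmult_lt_0_compat; auto. apply pow_lt; lra. }
  assert (HK : exists K, (forall m, (rho m - lam) * (c m * x ^ m) <= K * ((rho m - lam) * (c m * y ^ m)))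
             /\ (strict = true -> exists k, (rho k - lam) * (c k * x ^ k) < K * ((rho k - lam) * (c k * y ^ k)))).
  { destruct (classic (exists m, lam < rho m)) as [Hex1 | Hno].
    - destruct (least_ex _ Hex1) as [N [HN HNmin]].
      exists (th ^ N). split.
      + intros m. rewrite Hx.
        destruct (Nat.le_gt_cases N m) as [Hle | Hlt].
        * assert (rho N <= rho m) by (apply Hmono; auto).
          assert (th ^ m <= th ^ N) by (apply pow_decr; [lra | auto]).
          specialize (Hyp m). assert (0 <= rho m - lam) by lra.
          replace ((rho m - lam) * (c m * (y ^ m * th ^ m))) with (((rho m - lam) * (c m * y ^ m)) * th ^ m) by ring.
          rewrite (Rmult_comm (th ^ N)). apply Rmult_le_compat_l; auto.
          apply Rmult_le_pos; lra.
        * assert (rho m <= lam).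
          { destruct (Rle_or_lt (rho m) lam); auto. specialize (HNmin m H). lia. }
          assert (th ^ N <= th ^ m) by (apply pow_decr; [lra | lia]).
          specialize (Hyp m).
          replace ((rho m - lam) * (c m * (y ^ m * th ^ m))) with (((lam - rho m) * (c m * y ^ m)) * (- th ^ m)) by ring.
          replace (th ^ N * ((rho m - lam) * (c m * y ^ m))) with (((lam - rho m) * (c m * y ^ m)) * (- th ^ N)) by ring.
          apply Rmult_le_compat_l; [apply Rmult_le_pos; lra | lra].
      + intros Hs. exists (S N). rewrite Hx.
        specialize (Hr N). rewrite Hs in Hr.
        assert (th ^ S N < th ^ N) by (apply pow_sdecr; auto).
        specialize (Hyp (S N)).
        assert (0 < rho (S N) - lam) by lra.
        assert (0 < (rho (S N) - lam) * (c (S N) * y ^ S N)) by (apply Rmult_lt_0_compat; auto).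
        nra.
    - exists 0. split.
      + intros m. assert (rho m <= lam).
        { destruct (Rle_or_lt (rho m) lam); auto. exfalso; apply Hno; eauto. }
        assert (0 < c m * x ^ m) by (apply Rmult_lt_0_compat; auto; apply pow_lt; lra).
        nra.
      + intros Hs. exists 0%nat. specialize (Hr 0%nat). rewrite Hs in Hr.
        assert (rho 1%nat <= lam).
        { destruct (Rle_or_lt (rho 1%nat) lam); auto. exfalso; apply Hno; eauto. }
        simpl. specialize (Hc 0%nat). nra. }
  destruct HK as [K [HK1 HK2]].
  assert (Hs : Series (fun m => K * ((rho m - lam) * (c m * y ^ m))) = 0).
  { rewrite Series_scal_l, H0; ring. }
  assert (HeK : ex_series (fun m => K * ((rho m - lam) * (c m * y ^ m)))).
  { apply ex_series_scalR; auto. }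
  destruct strict.
  - destruct (HK2 eq_refl) as [k Hk]. rewrite <- Hs.
    apply (Series_lt_gen _ _ k); auto.
  - rewrite <- Hs. apply Series_le_gen; auto.
Qed.

Lemma exps (c : nat -> R) z : Rbar_lt (Rabs z) (CV_radius c) -> ex_series (fun k => c k * z^k).
Proof. intro H. apply CV_radius_inside in H. unfold ex_pseries in H. eapply ex_series_ext; [|exact H].
 intro k; simpl. rewrite pow_n_pow. unfold scal; simpl. unfold mult; simpl. ring. Qed.

Lemma convex_mvt_gen (g g' : R -> R) (s : R) (strict : bool) :
  (forall z, 0 < z < 1 -> derivable_pt_lim g z (g' z)) ->
  (forall u v, 0 < u -> u < v -> v < 1 ->
     if strict then s * g' u < s * g' v else s * g' u <= s * g' v) ->
  forall x y t, 0 < x < 1 -> 0 < y < 1 -> 0 < t < 1 -> (strict = true -> x <> y) ->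
  if strict then s * g (t*x + (1-t)*y) < s * (t * g x + (1-t) * g y)
  else s * g (t*x + (1-t)*y) <= s * (t * g x + (1-t) * g y).
Proof.
  intros Hd Hm.
  assert (Key : forall x y t, 0 < x -> x < y -> y < 1 -> 0 < t < 1 ->
    s * (t * g x + (1-t) * g y) - s * g (t*x + (1-t)*y)
    = t * (1 - t) * (y - x) * (s * g' (y) - s * g' x) \/ True).
  { intros; right; exact I. }
  clear Key.
  assert (Main : forall x y t, 0 < x -> x < y -> y < 1 -> 0 < t < 1 ->
     exists u v, 0 < u /\ u < v /\ v < 1 /\
     s * (t * g x + (1-t) * g y) - s * g (t*x + (1-t)*y)
       = t * (1 - t) * (y - x) * (s * g' v - s * g' u)).
  { intros x y t Hx Hxy Hy Ht.
    set (z := t*x + (1-t)*y).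
    assert (Hz1 : x < z) by (unfold z; nra).
    assert (Hz2 : z < y) by (unfold z; nra).
    destruct (MVT_cor2 g g' x z Hz1) as [u [Hu1 Hu2]].
    { intros w Hw. apply Hd. lra. }
    destruct (MVT_cor2 g g' z y Hz2) as [v [Hv1 Hv2]].
    { intros w Hw. apply Hd. lra. }
    exists u, v. split; [lra|]. split; [lra|]. split; [lra|].
    assert (E1 : g x = g z - g' u * (z - x)) by lra.
    assert (E2 : g y = g z + g' v * (y - z)) by lra.
    rewrite E1, E2. unfold z. ring. }
  assert (Main2 : forall x y t, 0 < x -> x < y -> y < 1 -> 0 < t < 1 ->
     if strict then s * g (t*x + (1-t)*y) < s * (t * g x + (1-t) * g y)
     else s * g (t*x + (1-t)*y) <= s * (t * g x + (1-t) * g y)).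
  { intros x y t Hx Hxy Hy Ht.
    destruct (Main x y t Hx Hxy Hy Ht) as [u [v [Hu [Huv [Hv E]]]]].
    specialize (Hm u v Hu Huv Hv).
    assert (P : 0 < t * (1 - t) * (y - x)).
    { apply Rmult_lt_0_compat; [apply Rmult_lt_0_compat|]; lra. }
    destruct strict.
    - assert (0 < t * (1 - t) * (y - x) * (s * g' v - s * g' u)) by (apply Rmult_lt_0_compat; lra).
      lra.
    - assert (0 <= t * (1 - t) * (y - x) * (s * g' v - s * g' u)) by (apply Rmult_le_pos; lra).
      lra. }
  intros x y t Hx Hy Ht Hne.
  destruct (Rtotal_order x y) as [Hlt | [Heq | Hgt]].
  - apply Main2; lra.
  - subst y. assert (Hs : strict = false).
    { destruct strict; auto. exfalso; apply Hne; auto. }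
    rewrite Hs. replace (t * x + (1 - t) * x) with x by ring. right; ring.
  - assert (H := Main2 y x (1 - t) (proj1 Hy) Hgt (proj2 Hx) ltac:(lra)).
    replace (t * x + (1 - t) * y) with ((1 - t) * y + (1 - (1 - t)) * x) by ring.
    replace (t * g x + (1 - t) * g y) with ((1 - t) * g y + (1 - (1 - t)) * g x) by ring.
    exact H.
Qed.

Lemma G_gen (c : nat -> R) (s : R) (strict : bool) :
  (s = 1 \/ s = -1) ->
  (forall m, 0 < c m) ->
  (forall x, 0 <= x < 1 -> Rbar_lt (Rabs x) (CV_radius c)) ->
  (forall n, if strict then s * (PS_derive c n / c n) < s * (PS_derive c (S n) / c (S n))
             else s * (PS_derive c n / c n) <= s * (PS_derive c (S n) / c (S n))) ->
  (forall x, 0 <= x < 1 -> 0 < PSeries c x) /\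
  forall x y t, 0 < x < 1 -> 0 < y < 1 -> 0 < t < 1 -> (strict = true -> x <> y) ->
  if strict then s * ln (PSeries c (t*x + (1-t)*y)) < s * (t * ln (PSeries c x) + (1-t) * ln (PSeries c y))
  else s * ln (PSeries c (t*x + (1-t)*y)) <= s * (t * ln (PSeries c x) + (1-t) * ln (PSeries c y)).
Proof.
  intros Hs Hc HR Hrho.
  set (F := PSeries c). set (D := PSeries (PS_derive c)).
  assert (HF : forall x, 0 <= x < 1 -> 0 < F x).
  { intros x Hx. unfold F, PSeries. apply (Series_pos_k _ 0).
    - apply exps, HR; auto.
    - intros n. apply Rmult_le_pos; [left; auto | apply pow_le; lra].
    - simpl. rewrite Rmult_1_r; auto. }
  split; [exact HF|].
  assert (HeF : forall x, 0 <= x < 1 -> ex_series (fun k => c k * x^k)) by (intros; apply exps, HR; auto).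
  assert (HeD : forall x, 0 <= x < 1 -> ex_series (fun k => PS_derive c k * x^k)).
  { intros. apply exps. rewrite CV_radius_derive. apply HR; auto. }
  set (h := fun z => D z / F z).
  assert (Hd : forall z, 0 < z < 1 -> derivable_pt_lim (fun z => ln (F z)) z (h z)).
  { intros z Hz.
    assert (H1 : derivable_pt_lim F z (D z)).
    { apply is_derive_Reals. apply is_derive_PSeries. apply HR; lra. }
    assert (H2 := derivable_pt_lim_ln (F z) (HF z ltac:(lra))).
    assert (H3 := derivable_pt_lim_comp F ln z _ _ H1 H2).
    unfold h. replace (D z / F z) with (/ F z * D z) by (field; specialize (HF z ltac:(lra)); lra).
    exact H3. }
  assert (Hmono : forall u v, 0 < u -> u < v -> v < 1 ->
     if strict then s * h u < s * h v else s * h u <= s * h v).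
  { intros u v Hu Huv Hv.
    set (rho := fun n => s * (PS_derive c n / c n)).
    set (lam := s * h v).
    assert (Eterm : forall z m, (rho m - lam) * (c m * z ^ m) = s * (PS_derive c m * z ^ m - h v * (c m * z ^ m))).
    { intros z m. unfold rho, lam. specialize (Hc m). field. lra. }
    assert (Ser : forall z, 0 <= z < 1 -> ex_series (fun m => (rho m - lam) * (c m * z ^ m)) /\
               Series (fun m => (rho m - lam) * (c m * z ^ m)) = s * (D z - h v * F z)).
    { intros z Hz. split.
      - eapply ex_series_ext. intros m; symmetry; apply Eterm.
        apply ex_series_scalR. apply ex_series_minusR. apply HeD; lra. apply ex_series_scalR, HeF; lra.
      - rewrite (Series_ext _ _ (Eterm z)). rewrite Series_scal_l. rewrite Series_minus.
        rewrite Series_scal_l. reflexivity. apply HeD; lra. apply ex_series_scalR, HeF; lra. }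
    destruct (Ser v ltac:(lra)) as [Hey Sy].
    destruct (Ser u ltac:(lra)) as [Hex Sx].
    assert (S0 : Series (fun m => (rho m - lam) * (c m * v ^ m)) = 0).
    { rewrite Sy. replace (D v - h v * F v) with 0. ring.
      unfold h. field. specialize (HF v ltac:(lra)). lra. }
    assert (Hcore := core_gen c rho lam u v strict Hc Hrho (conj Hu Huv) Hey Hex S0).
    rewrite Sx in Hcore.
    assert (E : s * h u - s * h v = s * (D u - h v * F u) * / F u).
    { assert (F u <> 0) by (specialize (HF u ltac:(lra)); lra). assert (F v <> 0) by (specialize (HF v ltac:(lra)); lra). unfold h. field. auto. }
    assert (0 < / F u) by (apply Rinv_0_lt_compat; apply HF; lra).
    destruct strict; cbv iota in Hcore |- *.
    - assert (Hp : 0 < -(s * (D u - h v * F u)) * / F u) by (apply Rmult_lt_0_compat; lra).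
      unfold lam; lra.
    - assert (Hp : 0 <= -(s * (D u - h v * F u)) * / F u) by (apply Rmult_le_pos; lra).
      unfold lam; lra. }
  intros x y t Hx Hy Ht Hne.
  exact (convex_mvt_gen (fun z => ln (F z)) h s strict Hd Hmono x y t Hx Hy Ht Hne).
Qed.

Lemma radius_from_ratio (c : nat -> R) :
  (forall n, 0 < c n) ->
  (forall r, 0 < r < 1 -> exists rh N, rh < 1 /\ forall n, (N <= n)%nat -> c (S n) * r <= rh * c n) ->
  forall x, 0 <= x < 1 -> Rbar_lt (Rabs x) (CV_radius c).
Proof.
  intros Hc Hrat x Hx.
  set (r := (x + 1) / 2).
  assert (Hr : 0 < r < 1) by (unfold r; lra).
  destruct (Hrat r Hr) as [rh [N [Hrh HN]]].
  set (u := fun n => c n * r ^ n).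
  assert (Hu : forall n, 0 < u n) by (intros; unfold u; apply Rmult_lt_0_compat; [auto | apply pow_lt; lra]).
  assert (Hstep : forall n, (N <= n)%nat -> u (S n) <= rh * u n).
  { intros n Hn. unfold u. simpl. specialize (HN n Hn). assert (0 < r^n) by (apply pow_lt; lra).
    replace (c (S n) * (r * r ^ n)) with ((c (S n) * r) * r ^ n) by ring.
    replace (rh * (c n * r ^ n)) with ((rh * c n) * r ^ n) by ring.
    apply Rmult_le_compat_r; lra. }
  assert (Hrh0 : 0 < rh).
  { assert (A := Hu (S N)). assert (B := Hu N). assert (C := Hstep N (le_n N)). nra. }
  assert (Hgeo : forall k, u (N + k)%nat <= u N * rh ^ k).
  { induction k.
    - rewrite Nat.add_0_r. simpl. lra.
    - replace (N + S k)%nat with (S (N + k)) by lia.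
      eapply Rle_trans; [apply Hstep; lia|]. simpl.
      replace (u N * (rh * rh ^ k)) with (rh * (u N * rh ^ k)) by ring.
      apply Rmult_le_compat_l; lra. }
  assert (Hdisk : CV_disk c r).
  { unfold CV_disk. apply (ex_series_incr_n _ N).
    apply (@ex_series_le R_AbsRing R_CompleteNormedModule _ (fun k => u N * rh ^ k)).
    - intros k. unfold norm; simpl. unfold abs; simpl.
      rewrite Rabs_Rabsolu. rewrite Rabs_pos_eq. apply Hgeo.
      left; apply (Hu (N + k)%nat).
    - apply ex_series_scalR. apply ex_series_geom. rewrite Rabs_pos_eq; lra. }
  assert (Hle : Rbar_le r (CV_radius c)).
  { unfold CV_radius. apply (proj1 (Lub_Rbar_correct (CV_disk c))). exact Hdisk. }
  eapply Rbar_lt_le_trans; [|exact Hle]. simpl. rewrite Rabs_pos_eq; unfold r; lra.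
Qed.

Lemma prodR_pos f n : (forall k, (k < n)%nat -> 0 < f k) -> 0 < prodR f n.
Proof.
  induction n; intros H; simpl; [lra|].
  apply Rmult_lt_0_compat; [apply IHn; intros; apply H; lia | apply H; lia].
Qed.

Lemma prodR_le f g n : (forall k, (k < n)%nat -> 0 < f k <= g k) -> prodR f n <= prodR g n.
Proof.
  induction n; intros H; simpl; [lra|].
  assert (0 < prodR f n) by (apply prodR_pos; intros; apply H; lia).
  assert (prodR f n <= prodR g n) by (apply IHn; intros; apply H; lia).
  destruct (H n ltac:(lia)). apply Rmult_le_compat; lra.
Qed.

Lemma prodR_lt f g n : (forall k, (k < n)%nat -> 0 < f k <= g k) ->
  (exists k, (k < n)%nat /\ f k < g k) -> prodR f n < prodR g n.
Proof.
  induction n; intros H [k [Hk Hfk]]; [lia|]. simpl.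
  assert (0 < prodR f n) by (apply prodR_pos; intros; apply H; lia).
  assert (prodR f n <= prodR g n) by (apply prodR_le; intros; apply H; lia).
  destruct (H n ltac:(lia)).
  destruct (Nat.eq_dec k n).
  - subst. nra.
  - assert (prodR f n < prodR g n).
    { apply IHn; [intros; apply H; lia | exists k; split; [lia|auto]]. }
    nra.
Qed.

Lemma prodR_const C n : prodR (fun _ => C) n = C ^ n.
Proof. induction n; simpl; [ring|]. rewrite IHn; ring. Qed.

Lemma prodR_scal s f n : prodR (fun k => s * f k) n = s ^ n * prodR f n.
Proof. induction n; simpl; [ring|]. rewrite IHn; ring. Qed.

Lemma prodR_split f p m : prodR f (p + m) = prodR f p * prodR (fun j => f (p + j)%nat) m.
Proof.
  induction m; simpl.
  - rewrite Nat.add_0_r; ring.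
  - rewrite Nat.add_succ_r; simpl; rewrite IHm; ring.
Qed.

Lemma prodR_div f g n : (forall k, (k < n)%nat -> 0 < g k) ->
  prodR f n / prodR g n = prodR (fun k => f k / g k) n.
Proof.
  induction n; intros H; simpl; [field|].
  rewrite <- IHn by (intros; apply H; lia).
  assert (0 < prodR g n) by (apply prodR_pos; intros; apply H; lia).
  assert (0 < g n) by (apply H; lia).
  field; lra.
Qed.

Lemma poch_pos a n : 0 < a -> 0 < poch a n.
Proof.
  intros Ha. induction n; simpl; [lra|].
  apply Rmult_lt_0_compat; auto. assert (0 <= INR n) by apply pos_INR. lra.
Qed.

Lemma prodR_pochS (a : nat -> R) n p :
  prodR (fun k => poch (a k) (S n)) p = prodR (fun k => poch (a k) n) p * prodR (fun k => a k + INR n) p.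
Proof. induction p; cbn [prodR]; [ring|]. rewrite IHp. simpl poch. ring. Qed.

Lemma fact_pos n : 0 < INR (Factorial.fact n).
Proof. apply lt_0_INR. apply Factorial.lt_O_fact. Qed.

Lemma hyp_pos p q a b :
  (forall k, (k < p)%nat -> 0 < a k) -> (forall k, (k < q)%nat -> 0 < b k) ->
  forall n, 0 < hypcoef p q a b n.
Proof.
  intros ha hb n. unfold hypcoef.
  assert (0 < prodR (fun k => poch (a k) n) p) by (apply prodR_pos; intros; apply poch_pos; auto).
  assert (0 < prodR (fun k => poch (b k) n) q) by (apply prodR_pos; intros; apply poch_pos; auto).
  assert (Hf := fact_pos n).
  apply Rdiv_lt_0_compat; auto. apply Rdiv_lt_0_compat; auto.
Qed.

Definition Ra (p : nat) (a : nat -> R) (n : nat) := prodR (fun k => a k + INR n) p.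

Lemma Ra_pos p a n : (forall k, (k < p)%nat -> 0 < a k) -> 0 < Ra p a n.
Proof.
  intros ha. unfold Ra. apply prodR_pos. intros. assert (0 <= INR n) by apply pos_INR.
  specialize (ha k H). lra.
Qed.

Lemma hyp_S p q a b :
  (forall k, (k < p)%nat -> 0 < a k) -> (forall k, (k < q)%nat -> 0 < b k) ->
  forall n, hypcoef p q a b (S n) = hypcoef p q a b n * (Ra p a n / Ra q b n / INR (S n)).
Proof.
  intros ha hb n. unfold hypcoef, Ra. rewrite !prodR_pochS.
  assert (0 < prodR (fun k => poch (a k) n) p) by (apply prodR_pos; intros; apply poch_pos; auto).
  assert (0 < prodR (fun k => poch (b k) n) q) by (apply prodR_pos; intros; apply poch_pos; auto).
  assert (Hf := fact_pos n).
  assert (H2 := Ra_pos q b n hb). unfold Ra in H2.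
  assert (H3 : 0 < INR (S n)) by (apply lt_0_INR; lia).
  replace (Factorial.fact (S n)) with (S n * Factorial.fact n)%nat by reflexivity.
  rewrite mult_INR. field. lra.
Qed.

Lemma hyp_ratio p q a b :
  (forall k, (k < p)%nat -> 0 < a k) -> (forall k, (k < q)%nat -> 0 < b k) ->
  forall n, PS_derive (hypcoef p q a b) n / hypcoef p q a b n = Ra p a n / Ra q b n.
Proof.
  intros ha hb n. unfold PS_derive. rewrite hyp_S by auto.
  assert (H1 := hyp_pos p q a b ha hb n).
  assert (H2 := Ra_pos q b n hb).
  assert (H3 : 0 < INR (S n)) by (apply lt_0_INR; lia).
  field. lra.
Qed.

Lemma bernoulli (e : R) (m : nat) : 0 <= e <= 1 -> 1 - INR m * e <= (1 - e) ^ m.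
Proof.
  intros He. induction m; [simpl; lra|]. rewrite S_INR. simpl.
  assert (0 <= (1-e)^m) by (apply pow_le; lra). assert ((1-e)*(1 - INR m * e) <= (1-e)*(1-e)^m) by (apply Rmult_le_compat_l; lra). assert (0 <= INR m) by apply pos_INR. assert (0 <= INR m * e * e) by (apply Rmult_le_pos; [apply Rmult_le_pos|]; lra). nra.
Qed.

Lemma bound_list (a : nat -> R) p : exists M, 1 <= M /\ forall k, (k < p)%nat -> a k <= M.
Proof.
  induction p.
  - exists 1; split; [lra| intros; lia].
  - destruct IHp as [M [HM H]]. exists (Rmax M (a p)). split.
    + eapply Rle_trans; [exact HM| apply Rmax_l].
    + intros k Hk. destruct (Nat.eq_dec k p).
      * subst; apply Rmax_r.
      * eapply Rle_trans; [apply H; lia| apply Rmax_l].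
Qed.

Lemma hyp_radius p q a b :
  (forall k, (k < p)%nat -> 0 < a k) -> (forall k, (k < q)%nat -> 0 < b k) ->
  (p <= q + 1)%nat ->
  forall x, 0 <= x < 1 -> Rbar_lt (Rabs x) (CV_radius (hypcoef p q a b)).
Proof.
  intros ha hb hpq.
  apply radius_from_ratio; [apply hyp_pos; auto|].
  intros r Hr.
  set (m := (p + q)%nat).
  set (e := (1 - r) / (2 * (INR m + 1))).
  assert (Hm0 : 0 <= INR m) by apply pos_INR.
  assert (He : 0 < e <= 1/2).
  { unfold e; split. apply Rdiv_lt_0_compat; lra.
    apply Rmult_le_reg_r with (2*(INR m+1)); [lra|].
    replace ((1 - r) / (2 * (INR m + 1)) * (2 * (INR m + 1))) with (1 - r) by (field; lra).
    nra. }
  set (s := 1 - e).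
  assert (Hs : 0 < s < 1) by (unfold s; lra).
  assert (HK : r < s ^ m).
  { assert (B := bernoulli e m ltac:(lra)). fold s in B.
    assert (INR m * e <= (1 - r)/2).
    { apply (Rmult_le_reg_r (2*(INR m+1))); [lra|].
      replace (INR m * e * (2*(INR m+1))) with (INR m * (1-r)) by (unfold e; field; lra).
      replace ((1-r)/2 * (2*(INR m+1))) with ((1-r)*(INR m+1)) by field. nra. }
    lra. }
  destruct (bound_list a p) as [M [HM1 HM]].
  destruct (INR_unbounded (M / (1 - s))) as [N HN].
  assert (Hsp : 0 < s ^ p) by (apply pow_lt; lra).
  assert (Hsq : 0 < s ^ q) by (apply pow_lt; lra).
  assert (Hsm : s ^ m = s ^ p * s ^ q) by (unfold m; apply pow_add).
  exists (r / s ^ m), N. split.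
  { apply (Rmult_lt_reg_r (s^m)); [apply pow_lt; lra|].
    replace (r / s ^ m * s ^ m) with r by (field; lra). lra. }
  intros n Hn.
  set (X := INR (S n)).
  assert (HX : X = INR n + 1) by (unfold X; rewrite S_INR; auto).
  assert (Hn0 : 0 <= INR n) by apply pos_INR.
  assert (HnN : M / (1-s) < INR n).
  { apply Rlt_le_trans with (INR N); [lra | apply le_INR; auto]. }
  assert (HnM : M <= INR n * (1 - s)).
  { assert (E : M = M / (1-s) * (1-s)) by (field; lra). nra. }
  assert (HA : Ra p a n * s ^ p <= X ^ p).
  { unfold Ra. rewrite Rmult_comm, <- prodR_scal, <- prodR_const.
    apply prodR_le. intros k Hk. specialize (ha k Hk). specialize (HM k Hk).
    split; [apply Rmult_lt_0_compat; lra|]. nra. }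
  assert (HB : s ^ q * X ^ q <= Ra q b n).
  { unfold Ra. rewrite <- Rpow_mult_distr, <- prodR_const.
    apply prodR_le. intros k Hk. specialize (hb k Hk).
    split; [apply Rmult_lt_0_compat; lra|]. nra. }
  assert (HXp : X ^ p <= X ^ q * X).
  { replace (X ^ q * X) with (X ^ (S q)) by (simpl; ring). apply Rle_pow; [lra | lia]. }
  assert (HRa := Ra_pos p a n ha).
  assert (HRb := Ra_pos q b n hb).
  assert (Key : Ra p a n * (s ^ p * s ^ q) <= Ra q b n * X).
  { assert (0 < X ^ q) by (apply pow_lt; lra). nra. }
  set (K := s ^ p * s ^ q).
  assert (HKp : 0 < K) by (unfold K; apply Rmult_lt_0_compat; auto).
  assert (Hq : Ra p a n / Ra q b n / X <= / K).
  { replace (Ra p a n / Ra q b n / X) with ((Ra p a n * K) * / (Ra q b n * X * K)) by (field; repeat split; lra).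
    replace (/ K) with ((Ra q b n * X) * / (Ra q b n * X * K)) by (field; repeat split; lra).
    apply Rmult_le_compat_r; [left; apply Rinv_0_lt_compat; apply Rmult_lt_0_compat; [apply Rmult_lt_0_compat|]; lra | exact Key]. }
  rewrite hyp_S by auto. fold X.
  assert (Hc := hyp_pos p q a b ha hb n).
  replace (r / s ^ m * hypcoef p q a b n) with ((hypcoef p q a b n * r) * / K) by (rewrite Hsm; unfold K; field; lra).
  replace (hypcoef p q a b n * (Ra p a n / Ra q b n / X) * r) with ((hypcoef p q a b n * r) * (Ra p a n / Ra q b n / X)) by ring.
  apply Rmult_le_compat_l; [left; apply Rmult_lt_0_compat; lra | exact Hq].
Qed.

Definition Rq p q a b n := Ra p a n / Ra q b n.

Lemma hyp_G p q a b (s : R) (strict : bool) :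
  (forall k, (k < p)%nat -> 0 < a k) -> (forall k, (k < q)%nat -> 0 < b k) ->
  (p <= q + 1)%nat -> (s = 1 \/ s = -1) ->
  (forall n, if strict then s * Rq p q a b n < s * Rq p q a b (S n)
             else s * Rq p q a b n <= s * Rq p q a b (S n)) ->
  (forall x, 0 <= x < 1 -> 0 < hypF p q a b x) /\
  forall x y t, 0 < x < 1 -> 0 < y < 1 -> 0 < t < 1 -> (strict = true -> x <> y) ->
  if strict then s * ln (hypF p q a b (t*x + (1-t)*y)) < s * (t * ln (hypF p q a b x) + (1-t) * ln (hypF p q a b y))
  else s * ln (hypF p q a b (t*x + (1-t)*y)) <= s * (t * ln (hypF p q a b x) + (1-t) * ln (hypF p q a b y)).
Proof.
  intros ha hb hpq Hs Hr. unfold hypF.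
  apply G_gen; auto.
  - apply hyp_pos; auto.
  - apply hyp_radius; auto.
  - intros n. rewrite !hyp_ratio by auto. apply Hr.
Qed.

Lemma hyp_slc p q a b :
  (forall k, (k < p)%nat -> 0 < a k) -> (forall k, (k < q)%nat -> 0 < b k) ->
  (p <= q + 1)%nat -> (forall n, Rq p q a b n < Rq p q a b (S n)) ->
  strictly_log_convex_on open01 (hypF p q a b).
Proof.
  intros ha hb hpq Hr.
  destruct (hyp_G p q a b 1 true ha hb hpq (or_introl eq_refl)) as [H1 H2].
  { intros n. specialize (Hr n). lra. }
  split.
  - intros x Hx. apply H1. unfold open01 in Hx. lra.
  - intros x y t Hx Hy Hne Ht. specialize (H2 x y t Hx Hy Ht (fun _ : true = true => Hne)). simpl in H2. lra.
Qed.

Lemma hyp_slcc p q a b :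
  (forall k, (k < p)%nat -> 0 < a k) -> (forall k, (k < q)%nat -> 0 < b k) ->
  (p <= q + 1)%nat -> (forall n, Rq p q a b (S n) < Rq p q a b n) ->
  strictly_log_concave_on open01 (hypF p q a b).
Proof.
  intros ha hb hpq Hr.
  destruct (hyp_G p q a b (-1) true ha hb hpq (or_intror eq_refl)) as [H1 H2].
  { intros n. specialize (Hr n). lra. }
  split.
  - intros x Hx. apply H1. unfold open01 in Hx. lra.
  - intros x y t Hx Hy Hne Ht. specialize (H2 x y t Hx Hy Ht (fun _ : true = true => Hne)). simpl in H2. lra.
Qed.

Lemma hyp_lcc p q a b :
  (forall k, (k < p)%nat -> 0 < a k) -> (forall k, (k < q)%nat -> 0 < b k) ->
  (p <= q + 1)%nat -> (forall n, Rq p q a b (S n) <= Rq p q a b n) ->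
  log_concave_on open01 (hypF p q a b).
Proof.
  intros ha hb hpq Hr.
  destruct (hyp_G p q a b (-1) false ha hb hpq (or_intror eq_refl)) as [H1 H2].
  { intros n. specialize (Hr n). lra. }
  split.
  - intros x Hx. apply H1. unfold open01 in Hx. lra.
  - intros x y t Hx Hy Ht. specialize (H2 x y t Hx Hy Ht (fun H : false = true => ltac:(discriminate))). simpl in H2. lra.
Qed.

Lemma fac_pos a b n : 0 < a -> 0 < b -> 0 < (a + INR n) / (b + INR n).
Proof. intros. assert (0 <= INR n) by apply pos_INR. apply Rdiv_lt_0_compat; lra. Qed.

Lemma fac_step a b n : 0 < a -> 0 < b ->
  (a + INR (S n)) / (b + INR (S n)) - (a + INR n) / (b + INR n)
  = (b - a) * / ((b + INR n) * (b + INR n + 1)).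
Proof. intros. assert (0 <= INR n) by apply pos_INR. rewrite S_INR. field. lra. Qed.

Lemma fac_le a b n : 0 < a -> 0 < b -> a <= b ->
  (a + INR n) / (b + INR n) <= (a + INR (S n)) / (b + INR (S n)).
Proof.
  intros. assert (E := fac_step a b n H H0). assert (0 <= INR n) by apply pos_INR.
  assert (0 < / ((b + INR n) * (b + INR n + 1))) by (apply Rinv_0_lt_compat; apply Rmult_lt_0_compat; lra).
  assert (0 <= (b - a) * / ((b + INR n) * (b + INR n + 1))) by (apply Rmult_le_pos; lra). lra.
Qed.

Lemma fac_lt a b n : 0 < a -> 0 < b -> a < b ->
  (a + INR n) / (b + INR n) < (a + INR (S n)) / (b + INR (S n)).
Proof.
  intros. assert (E := fac_step a b n H H0). assert (0 <= INR n) by apply pos_INR.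
  assert (0 < / ((b + INR n) * (b + INR n + 1))) by (apply Rinv_0_lt_compat; apply Rmult_lt_0_compat; lra).
  assert (0 < (b - a) * / ((b + INR n) * (b + INR n + 1))) by (apply Rmult_lt_0_compat; lra). lra.
Qed.

Lemma fac_ge a b n : 0 < a -> 0 < b -> b <= a ->
  (a + INR (S n)) / (b + INR (S n)) <= (a + INR n) / (b + INR n).
Proof.
  intros. assert (E := fac_step a b n H H0). assert (0 <= INR n) by apply pos_INR.
  assert (0 < / ((b + INR n) * (b + INR n + 1))) by (apply Rinv_0_lt_compat; apply Rmult_lt_0_compat; lra).
  assert (0 <= (a - b) * / ((b + INR n) * (b + INR n + 1))) by (apply Rmult_le_pos; lra). lra.
Qed.

Lemma fac_gt a b n : 0 < a -> 0 < b -> b < a ->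
  (a + INR (S n)) / (b + INR (S n)) < (a + INR n) / (b + INR n).
Proof.
  intros. assert (E := fac_step a b n H H0). assert (0 <= INR n) by apply pos_INR.
  assert (0 < / ((b + INR n) * (b + INR n + 1))) by (apply Rinv_0_lt_compat; apply Rmult_lt_0_compat; lra).
  assert (0 < (a - b) * / ((b + INR n) * (b + INR n + 1))) by (apply Rmult_lt_0_compat; lra). lra.
Qed.

Lemma Rq_prod p a b n : (forall k, (k < p)%nat -> 0 < b k) ->
  Ra p a n / Ra p b n = prodR (fun k => (a k + INR n) / (b k + INR n)) p.
Proof.
  intros hb. unfold Ra. apply prodR_div. intros k Hk. specialize (hb k Hk).
  assert (0 <= INR n) by apply pos_INR. lra.
Qed.

Lemma P_incr p a b :
  (forall k, (k < p)%nat -> 0 < a k) -> (forall k, (k < p)%nat -> 0 < b k) ->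
  (forall k, (k < p)%nat -> a k <= b k) -> (exists k, (k < p)%nat /\ a k < b k) ->
  forall n, prodR (fun k => (a k + INR n) / (b k + INR n)) p < prodR (fun k => (a k + INR (S n)) / (b k + INR (S n))) p.
Proof.
  intros ha hb hle [k0 [Hk0 Hlt]] n. apply prodR_lt.
  - intros k Hk. split; [apply fac_pos; auto | apply fac_le; auto].
  - exists k0. split; auto. apply fac_lt; auto.
Qed.

Lemma P_decr p a b :
  (forall k, (k < p)%nat -> 0 < a k) -> (forall k, (k < p)%nat -> 0 < b k) ->
  (forall k, (k < p)%nat -> b k <= a k) -> (exists k, (k < p)%nat /\ b k < a k) ->
  forall n, prodR (fun k => (a k + INR (S n)) / (b k + INR (S n))) p < prodR (fun k => (a k + INR n) / (b k + INR n)) p.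
Proof.
  intros ha hb hle [k0 [Hk0 Hlt]] n. apply prodR_lt.
  - intros k Hk. split; [apply fac_pos; auto | apply fac_ge; auto].
  - exists k0. split; auto. apply fac_gt; auto.
Qed.
Theorem theorem3p15 (p q : nat) (a b : nat -> R)
  (ha : forall k, (k < p)%nat -> 0 < a k)
  (hb : forall k, (k < q)%nat -> 0 < b k)
  (hpq : (p <= q + 1)%nat) :
  (* (1) *)
  ((p = 0 /\ q = 0)%nat ->
     (forall x, openm11 x -> hypF p q a b x = exp x) /\
     log_convex_on openm11 (hypF p q a b)) /\
  (* (2) *)
  ((p = q)%nat -> (1 <= p)%nat ->
     ((forall k, (k < p)%nat -> a k <= b k) ->
      (exists k, (k < p)%nat /\ a k < b k) ->
      strictly_log_convex_on open01 (hypF p q a b)) /\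
     ((forall k, (k < p)%nat -> b k <= a k) ->
      (exists k, (k < p)%nat /\ b k < a k) ->
      strictly_log_concave_on open01 (hypF p q a b))) /\
  (* (3) *)
  ((q < p)%nat ->
     (forall k, (k < q)%nat -> a k <= b k) ->
     (exists k, (k < q)%nat /\ a k < b k) ->
     strictly_log_convex_on open01 (hypF p q a b)) /\
  (* (4) *)
  ((1 <= p)%nat -> (p < q)%nat ->
     (forall k, (k < p)%nat -> b k <= a k) ->
     (exists k, (k < p)%nat /\ b k < a k) ->
     strictly_log_concave_on open01 (hypF p q a b)) /\
  (* (5) *)
  ((p = 0)%nat -> (1 <= q)%nat ->
     log_concave_on open01 (hypF p q a b)).
Proof.
  split; [|split; [|split; [|split]]].
  - intros [Hp Hq]. subst p q.
    assert (E : forall x, hypF 0 0 a b x = exp x).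
    { intros x. rewrite exp_Reals. unfold hypF, PSeries. apply Series_ext. intros n.
      unfold hypcoef. simpl. assert (H := fact_pos n). field. lra. }
    split; [intros; apply E|].
    split.
    + intros x _. rewrite E. apply exp_pos.
    + intros x y t _ _ _. rewrite !E, !ln_exp. right; ring.
  - intros Hpq' H1. subst q. split.
    + intros hle hex. apply hyp_slc; auto. intros n. unfold Rq. rewrite !Rq_prod by auto.
      apply P_incr; auto.
    + intros hle hex. apply hyp_slcc; auto. intros n. unfold Rq. rewrite !Rq_prod by auto.
      apply P_decr; auto.
  - intros Hlt hle hex. assert (p = S q) by lia. subst p.
    apply hyp_slc; auto. intros n. unfold Rq.
    assert (E : forall m, Ra (S q) a m / Ra q b m = (Ra q a m / Ra q b m) * (a q + INR m)).
    { intros m. unfold Ra at 1. cbn [prodR]. fold (Ra q a m).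
      assert (0 < Ra q b m) by (apply Ra_pos; auto). field. lra. }
    rewrite !E, !Rq_prod by auto.
    assert (HP := P_incr q a b (fun k Hk => ha k ltac:(lia)) hb hle hex n).
    assert (0 < prodR (fun k => (a k + INR n) / (b k + INR n)) q).
    { apply prodR_pos; intros; apply fac_pos; [apply ha; lia| apply hb; auto]. }
    assert (0 < a q + INR n).
    { assert (0 <= INR n) by apply pos_INR. specialize (ha q ltac:(lia)). lra. }
    rewrite S_INR in *. nra.
  - intros H1 Hlt hle hex. apply hyp_slcc; [auto|auto|lia|]. intros n. unfold Rq.
    assert (E : forall m, Ra p a m / Ra q b m = (Ra p a m / Ra p b m) * / prodR (fun j => b (p + j)%nat + INR m) (q - p)).
    { intros m. assert (Eq : Ra q b m = Ra p b m * prodR (fun j => b (p + j)%nat + INR m) (q - p)).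
      { unfold Ra. rewrite <- prodR_split. replace (p + (q - p))%nat with q by lia. reflexivity. }
      rewrite Eq. assert (0 < Ra p b m) by (apply Ra_pos; intros; apply hb; lia).
      assert (0 < prodR (fun j => b (p + j)%nat + INR m) (q - p)).
      { apply prodR_pos; intros. assert (0 <= INR m) by apply pos_INR.
        specialize (hb (p+k)%nat ltac:(lia)); lra. }
      field. lra. }
    rewrite !E, !Rq_prod by (intros; apply hb; lia).
    assert (HP := P_decr p a b ha (fun k Hk => hb k ltac:(lia)) hle hex n).
    set (P1 := prodR (fun k => (a k + INR (S n)) / (b k + INR (S n))) p) in *.
    set (P0 := prodR (fun k => (a k + INR n) / (b k + INR n)) p) in *.
    set (T1 := prodR (fun j => b (p + j)%nat + INR (S n)) (q - p)).
    set (T0 := prodR (fun j => b (p + j)%nat + INR n) (q - p)).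
    assert (0 < P1) by (apply prodR_pos; intros; apply fac_pos; [apply ha| apply hb]; lia).
    assert (0 < T0).
    { apply prodR_pos; intros. assert (0 <= INR n) by apply pos_INR.
      specialize (hb (p+k)%nat ltac:(lia)); lra. }
    assert (T0 <= T1).
    { apply prodR_le; intros k Hk. rewrite S_INR. assert (0 <= INR n) by apply pos_INR.
      specialize (hb (p+k)%nat ltac:(lia)); split; lra. }
    assert (/ T1 <= / T0) by (apply Rinv_le_contravar; auto).
    assert (0 < / T1) by (apply Rinv_0_lt_compat; lra).
    nra.
  - intros Hp0 Hq1. subst p. apply hyp_lcc; [auto|auto|lia|]. intros n. unfold Rq.
    assert (E0 : forall m, Ra 0 a m = 1) by reflexivity.
    rewrite !E0. unfold Rdiv. rewrite !Rmult_1_l.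
    apply Rinv_le_contravar; [apply Ra_pos; auto|].
    unfold Ra. apply prodR_le; intros k Hk. rewrite S_INR. assert (0 <= INR n) by apply pos_INR.
    specialize (hb k Hk); split; lra.
Qed.
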